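(* Let $V\subset\mathbb{R}^d$ be a finite non-degenerate antichain and let $p\in S_V$ be a generated point. Then $p$ is a characteristic point if and only if there are no minima $u,v\in D_p$ with $T_p(u)\subsetneq T_p(v)$.
   Context: For $x,y\in\mathbb{R}^d$, $x\le y$ (dominance order) means $x_i\le y_i$ for all $i$; $y\rhd x$ means $y_i>x_i$ for all $i$; $y\rhd_i x$ means $y_i=x_i$ and $y_j>x_j$ for all $j\neq i$. The join is the componentwise maximum. $V\subset\mathbb{R}^d$ is a finite antichain in the dominance order (elements are called minima). The orthogonal surface $S_V$ is the topological boundary of $\langle V\rangle=\{x: x\ge v\text{ for some }v\in V\}$; equivalently $p\in S_V$ iff there is $v\in V$ with $v\le p$ and no $w\in V$ with $p\rhd w$. For $p\in S_V$, $D_p=\{v\in V:v\le p\}$ and for $v\in D_p$, $T_p(v)=\{i: p_i=v_i\}$. A generated point is a point $p\in S_V$ equal to $\bigvee G$ for some nonempty $G\subseteq V$. Flats: $U_i(v)=\{p\in S_V: p\rhd_i v\}$; for $v,w\in V$ put $v\sim_i w$ iff $U_i(v)\cap U_i(w)\neq\emptyset$, and let $\sim_i^c$ be the reflexive–transitive closure; the $i$-flat of $v$ is $F_i(v)=\overline{\bigcup_{w\sim_i^c v}U_i(w)}$ (topological closure), and an $i$-flat is any set of this form. A characteristic point is a point of $S_V$ that lies in some $i$-flat for every $i\in\{1,\dots,d\}$. $V$ (and $S_V$) is degenerate if there exist a characteristic point $p$, minima $x,u,v\in D_p$ and coordinates $i\neq j$ with $u_i<v_i=x_i=p_i$ and $v_j<u_j=x_j=p_j$;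 otherwise $V$ is non-degenerate. *)

(* Defs.v *)
From HB Require Import structures.
From mathcomp Require Import all_boot all_order all_algebra.
From mathcomp Require Import all_classical all_reals all_analysis.
From Stdlib Require Import Relations.
Set Implicit Arguments. Unset Strict Implicit. Unset Printing Implicit Defensive.
Import Order.TTheory GRing.Theory Num.Theory.
Import numFieldTopology.Exports.
Local Open Scope classical_set_scope.
Local Open Scope ring_scope.

Section OrthSurf.
Variables (R : realType) (d : nat).
Notation pt := 'rV[R]_d.

Definition dle (x y : pt) : Prop := forall i : 'I_d, x 0 i <= y 0 i.
Definition dgt (y x : pt) : Prop := forall i : 'I_d, x 0 i < y 0 i.
Definition dgti (i : 'I_d) (y x : pt) : Prop :=
  y 0 i = x 0 i /\ forall j : 'I_d, j != i -> x 0 j < y 0 j.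

Definition djoin (G : seq pt) : pt :=
  \row_i \big[Num.max/(head 0 G) 0 i]_(g <- G) g 0 i.

Variable V : seq pt.

Definition antichain : Prop :=
  forall v w, v \in V -> w \in V -> dle v w -> v = w.

Definition surf (p : pt) : Prop :=
  (exists2 v, v \in V & dle v p) /\ ~ (exists2 w, w \in V & dgt p w).

Definition inD (p v : pt) : Prop := v \in V /\ dle v p.

Definition T (p v : pt) (i : 'I_d) : Prop := p 0 i = v 0 i.

Definition generated (p : pt) : Prop :=
  surf p /\ exists G : seq pt, [/\ G != [::], all (fun g => g \in V) G & p = djoin G].

Definition U (i : 'I_d) (v : pt) : set pt := [set p | surf p /\ dgti i p v].

Definition simi (i : 'I_d) (v w : pt) : Prop :=
  [/\ v \in V, w \in V & exists p, U i v p /\ U i w p].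

Definition flat (i : 'I_d) (v : pt) : set pt :=
  closure [set p | exists w, clos_refl_trans pt (simi i) v w /\ U i w p].

Definition is_iflat (i : 'I_d) (F : set pt) : Prop :=
  exists2 v, v \in V & F = flat i v.

Definition characteristic (p : pt) : Prop :=
  surf p /\ forall i : 'I_d, exists F, is_iflat i F /\ F p.

Definition degenerate : Prop :=
  exists p, characteristic p /\
  exists x u v, [/\ inD p x, inD p u & inD p v] /\
  exists i j : 'I_d, i != j /\
    (u 0 i < v 0 i /\ v 0 i = x 0 i /\ x 0 i = p 0 i) /\
    (v 0 j < u 0 j /\ u 0 j = x 0 j /\ x 0 j = p 0 j).

End OrthSurf.

(* Main.v *)
Require Import Defs.
From HB Require Import structures.
From mathcomp Require Import all_boot all_order all_algebra.
From mathcomp Require Import all_classical all_reals all_analysis.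
From mathcomp Require Import lra.
From Stdlib Require Import Relations.
Import Order.TTheory GRing.Theory Num.Theory numFieldTopology.Exports numFieldNormedType.Exports.
Set Implicit Arguments. Unset Strict Implicit.
Local Open Scope classical_set_scope.
Local Open Scope ring_scope.

Section Aux.
Variables (R : realType) (d : nat).
Notation pt := 'rV[R]_d.

Lemma pos_lb (s : seq R) :
  exists2 e : R, 0 < e & forall y, y \in s -> y != 0 -> e <= `|y|.
Proof.
elim: s => [|a s [e e0 He]]; first by exists 1 => // y; rewrite in_nil.
case: (eqVneq a 0) => [->|a0].
  exists e => // y; rewrite in_cons => /orP[/eqP->|ys]; first by rewrite eqxx.
  exact: He.
exists (Num.min e `|a|); first by rewrite lt_min e0 normr_gt0.
move=> y; rewrite in_cons => /orP[/eqP->|ys] y0; rewrite ge_min.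
  by rewrite lexx orbT.
by rewrite He.
Qed.

Lemma gap (V : seq pt) (p : pt) : exists2 e : R, 0 < e &
  forall x l, x \in V -> x 0 l != p 0 l -> e <= `|x 0 l - p 0 l|.
Proof.
have [e e0 He] := pos_lb [seq (x : pt) 0 l - p 0 l | x <- V, l <- enum 'I_d].
exists e => // x l xV xl; apply: He; last by rewrite subr_eq0.
by apply: (allpairs_f (fun (x : pt) l => x 0 l - p 0 l)) => //; rewrite mem_enum.
Qed.

Lemma rt_inV (V : seq pt) i v w : v \in V ->
  clos_refl_trans pt (simi V i) v w -> w \in V.
Proof.
move=> vV H; elim: H vV => [x y [] //|//|x y z _ IH1 _ IH2 xV].
exact: IH2 (IH1 xV).
Qed.

Lemma bigmax_in (s : seq pt) (a : R) (f : pt -> R) :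
  \big[Num.max/a]_(g <- s) f g = a \/
  exists2 g, g \in s & \big[Num.max/a]_(g <- s) f g = f g.
Proof.
elim: s => [|x s IH]; first by left; rewrite big_nil.
rewrite big_cons maxEle; case: ifP => _.
  case: IH => [->|[g gs ->]]; first by left.
  by right; exists g => //; rewrite in_cons gs orbT.
by right; exists x => //; rewrite in_cons eqxx.
Qed.

Lemma bigmax_ge (s : seq pt) (a : R) (f : pt -> R) g :
  g \in s -> f g <= \big[Num.max/a]_(g <- s) f g.
Proof.
elim: s => [|x s IH]; first by rewrite in_nil.
rewrite big_cons in_cons le_max => /orP[/eqP->|gs]; first by rewrite lexx.
by rewrite IH ?orbT.
Qed.

Lemma ballP (p q : pt) (e : R) : ball p e q -> forall l, `|p 0 l - q 0 l| < e.
Proof. by case=> _ H l; exact: H. Qed.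

Lemma ballI (p q : pt) (e : R) : 0 < e ->
  (forall l, `|p 0 l - q 0 l| < e) -> ball p e q.
Proof. by move=> e0 H; split => // i j; rewrite (ord1 i); exact: H. Qed.

End Aux.

Theorem proposition4p2 (R : realType) (d : nat) (V : seq 'rV[R]_d) (p : 'rV[R]_d) :
  antichain V -> ~ degenerate V -> generated V p ->
  (characteristic V p <->
   ~ (exists u v, [/\ inD V p u, inD V p v,
        (forall i, T p u i -> T p v i) & (exists i, T p v i /\ ~ T p u i)])).
Proof.
move=> _ ndeg [surfp [G [G0 GV pG]]].
have [e e0 He] := gap V p.
split.
- move=> Hch [u [v [[uV up] [vV vp] Hsub [i [Tvi nTui]]]]].
  apply: ndeg; exists p; split => //.
  have [F [[v0 v0V ->] Fp]] := Hch.2 i.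
  have [q [[w [rtw [surfq [qwi qwj]]]] bq]] := Fp _ (nbhsx_ballx p _ e0).
  have wV := rt_inV v0V rtw.
  have bl := ballP bq.
  have wi : w 0 i = p 0 i.
    apply/eqP; apply/negP => /negP H; have := He _ _ wV H.
    have := bl i; rewrite -qwi !ltr_norml ler_normr; lra.
  have wp : dle w p.
    move=> l; case: (eqVneq l i) => [->|li]; first by rewrite wi.
    rewrite leNgt; apply/negP => pw.
    have := He _ _ wV (negbT (gt_eqF pw)); have := qwj l li.
    have := bl l; rewrite !ltr_norml ler_normr; lra.
  case: (pselect (exists l, q 0 l <= u 0 l)) => [[l ql]|Hno]; last first.
    exfalso; apply: surfq.2; exists u => // l; rewrite ltNge; apply/negP => H.
    by apply: Hno; exists l.
  have ui := up i.
  have li : l != i.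
    apply/negP => /eqP E; subst l; apply: nTui; apply/eqP.
    by rewrite eq_le ui andbT -wi -qwi ql.
  have ul : u 0 l = p 0 l.
    apply/eqP; apply/negP => /negP H; have := He _ _ uV H.
    have := up l; have := bl l; rewrite !ltr_norml ler_normr; lra.
  have wl : w 0 l < p 0 l by rewrite -ul; apply: lt_le_trans (qwj l li) ql.
  exists v, u, w; split; first by split.
  exists i, l; split; first by rewrite eq_sym.
  have ui' : u 0 i < p 0 i by rewrite lt_neqAle ui andbT; apply/eqP => E; apply: nTui.
  have vl : p 0 l = v 0 l by apply: Hsub.
  split; split; [|split| |split]; rewrite ?wi ?ul -?vl -?Tvi //.
- move=> Hno; split => // i.
  have [w [wV wp wi]] : exists w, [/\ w \in V, dle w p & w 0 i = p 0 i].
    case: G G0 GV pG => [//|g0 G'] _ GV pG.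
    have ge g : g \in g0 :: G' -> dle g p.
      by move=> gG l; rewrite pG mxE; apply: bigmax_ge.
    have pi := bigmax_in (g0 :: G') (head 0 (g0 :: G') 0 i) (fun g => g 0 i).
    case: pi => [E|[g gG E]].
      exists g0; split; first by apply: (allP GV); rewrite in_cons eqxx.
      by apply: ge; rewrite in_cons eqxx.
      by rewrite pG mxE E.
    exists g; split; [exact: (allP GV)|exact: ge|by rewrite pG mxE E].
  exists (flat V i w); split; first by exists w.
  move=> B /nbhs_ballP [e' /= e'0 Be'].
  pose eps := Num.min e (e' / 2).
  have eps0 : 0 < eps by rewrite lt_min e0 divr_gt0.
  have epse : eps <= e by rewrite ge_min lexx.
  have epse' : eps <= e' / 2 by rewrite ge_min lexx orbT.
  pose q : 'rV[R]_d := \row_j (if (j != i) && (p 0 j == w 0 j) then p 0 j + eps else p 0 j).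
  have qE j : q 0 j = if (j != i) && (p 0 j == w 0 j) then p 0 j + eps else p 0 j by rewrite mxE.
  have pq j : p 0 j <= q 0 j <= p 0 j + eps.
    rewrite qE; case: ifP => _; lra.
  exists q; split.
    exists w; split; first exact: rt_refl.
    split; last first.
      split; first by rewrite qE eqxx /= wi.
      move=> j ji; rewrite qE ji /=; case: eqP => [<-|pw]; first lra.
      have := wp j; rewrite le_eqVlt => /orP[/eqP E|//]; first by rewrite E in pw.
    split; first by exists w => // j; have := wp j; have := pq j; lra.
    move=> [x xV xq].
    have xp : dle x p.
      move=> j; rewrite leNgt; apply/negP => px.
      have := He _ _ xV (negbT (gt_eqF px)); have := xq j; have := pq j.
      rewrite ler_normr; lra.
    apply: Hno; exists x, w; split => //.
      move=> j Txj; rewrite /T; have := xq j; rewrite qE -Txj.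
      case: ifP => [/andP[_ /eqP]//|_]; rewrite ltxx //.
    exists i; split; first by rewrite /T wi.
    rewrite /T => E; have := xq i; rewrite qE eqxx /= -E ltxx //.
  apply: Be'; apply: ballI => // j.
  rewrite ltr_norml; have := pq j; lra.
Qed.
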